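(* Let $r \ge 3$ and $n \ge 2r^5$. Let $\mathcal{H}$ be an intersecting $r$-uniform $n$-vertex hypergraph with $\delta_{r-1}^+(\mathcal{H}) \ge 3$ having the maximum number of hyperedges among all intersecting $r$-uniform $n$-vertex hypergraphs with minimum positive co-degree at least $3$. Then $\mathcal{H}$ is a $3$-kernel system.
   Context: A hypergraph is intersecting if every two of its hyperedges share at least one vertex. For a non-empty $r$-uniform hypergraph $\mathcal{H}$, the minimum positive co-degree $\delta_{r-1}^+(\mathcal{H})$ is the largest integer $k$ such that every $(r-1)$-set of vertices that is contained in at least one hyperedge of $\mathcal{H}$ is contained in at least $k$ distinct hyperedges of $\mathcal{H}$; for the empty hypergraph it is $0$. Given integers $r \ge k \ge 1$, an $r$-uniform $k$-kernel system on vertex set $V$ is a hypergraph whose hyperedge set is $\{E \in \binom{V}{r} : |E \cap X| \ge k\}$ for some set $X \subseteq V$ with $|X| = 2k-1$. *)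

(* Defs.v *)
From mathcomp Require Import all_boot.
Set Implicit Arguments. Unset Strict Implicit. Unset Printing Implicit Defensive.

Definition hypergraph (n : nat) := {set {set 'I_n}}.

Definition uniform (n r : nat) (H : hypergraph n) : bool :=
  [forall E in H, #|E| == r].

Definition intersecting (n : nat) (H : hypergraph n) : bool :=
  [forall E in H, forall F in H, E :&: F != set0].

Definition codeg (n : nat) (H : hypergraph n) (S : {set 'I_n}) : nat :=
  #|[set E in H | S \subset E]|.

Definition in_shadow (n r : nat) (H : hypergraph n) (S : {set 'I_n}) : bool :=
  (#|S| == r.-1) && [exists E in H, S \subset E].

(* minimum positive co-degree: the largest k such that every (r-1)-set in
   some hyperedge lies in at least k hyperedges; 0 for the empty hypergraph.
   Such k never exceeds #|H| when H is nonempty (and r >= 1), so the max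
   is taken over k <= #|H|. *)
Definition min_pos_codeg (n r : nat) (H : hypergraph n) : nat :=
  if H == set0 then 0 else
  \max_(k < #|H|.+1 | [forall S, in_shadow r H S ==> (k <= codeg H S)]) k.

Definition kernel_system (n r k : nat) (H : hypergraph n) : Prop :=
  exists X : {set 'I_n}, #|X| = (2 * k).-1 /\
    H = [set E : {set 'I_n} | (#|E| == r) && (k <= #|E :&: X|)].

(* Main.v *)
Require Import Defs.
From mathcomp Require Import all_boot zify.
Set Implicit Arguments. Unset Strict Implicit. Unset Printing Implicit Defensive.

Lemma card_bigcup_leq (I T : finType) (A : {set I}) (F : I -> {set T}) :
  #|\bigcup_(i in A) F i| <= \sum_(i in A) #|F i|.
Proof.
elim/big_rec2: _ => [|i m X _ h]; first by rewrite cards0.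
apply: leq_trans (leq_card_setU _ X).1 _.
by rewrite leq_add2l.
Qed.

Lemma ub (T : finType) (G D : {set {set T}}) b :
  (forall E, E \in G -> exists2 Q, Q \in D & Q \subset E) ->
  (forall Q, Q \in D -> #|[set E in G | Q \subset E]| <= b) ->
  #|G| <= #|D| * b.
Proof.
move=> hc hb.
have sub : G \subset \bigcup_(Q in D) [set E in G | Q \subset E].
  apply/subsetP=> E EG; have [Q QD QE] := hc E EG.
  by apply/bigcupP; exists Q => //; rewrite inE EG.
apply: leq_trans (subset_leq_card sub) _.
apply: leq_trans (card_bigcup_leq _ _) _.
rewrite -sum_nat_const; exact: leq_sum.
Qed.

Lemma branch (T : finType) (G : {set {set T}}) (S F : {set T}) b :
  (forall E, E \in G -> S \subset E -> exists2 x, x \in F & x \in E) ->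
  (forall x, x \in F -> #|[set E in G | (x |: S) \subset E]| <= b) ->
  #|[set E in G | S \subset E]| <= #|F| * b.
Proof.
move=> hc hb.
have sub : [set E in G | S \subset E] \subset
           \bigcup_(x in F) [set E in G | (x |: S) \subset E].
  apply/subsetP=> E; rewrite inE => /andP[EG SE]; have [x xF xE] := hc E EG SE.
  by apply/bigcupP; exists x => //; rewrite inE EG subUset sub1set xE SE.
apply: leq_trans (subset_leq_card sub) _.
apply: leq_trans (card_bigcup_leq _ _) _.
rewrite -sum_nat_const; exact: leq_sum.
Qed.

Lemma setDUS (T : finType) (S E : {set T}) : S \subset E -> (E :\: S) :|: S = E.
Proof.
move=> SE; apply/setP=> x; rewrite !inE.
by case xS: (x \in S); case xE: (x \in E) => //=; rewrite (subsetP SE) in xE.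
Qed.

Lemma cnt (T : finType) (S : {set T}) r :
  #|[set E : {set T} | (#|E| == r) && (S \subset E)]| <= 'C(#|T| - #|S|, r - #|S|).
Proof.
have -> : #|T| - #|S| = #|~: S| by rewrite -(cardsC S) addKn.
rewrite -cards_draws.
set D := [set A : {set T} | A \subset ~: S & #|A| == r - #|S|].
have sub : [set E : {set T} | (#|E| == r) && (S \subset E)] \subset (fun A => A :|: S) @: D.
  apply/subsetP=> E; rewrite inE => /andP[/eqP Er SE].
  apply/imsetP; exists (E :\: S); last by rewrite setDUS.
  rewrite inE; apply/andP; split.
    by apply/subsetP=> x; rewrite !inE => /andP[].
  by rewrite cardsD Er (setIidPr SE).
exact: leq_trans (subset_leq_card sub) (leq_imset_card _ _).
Qed.

Lemma cnt0 (T : finType) (S : {set T}) r : r < #|S| ->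
  #|[set E : {set T} | (#|E| == r) && (S \subset E)]| = 0.
Proof.
move=> lt; apply: eq_card0 => E; rewrite inE; apply/negP => /andP[/eqP Er SE].
by have := subset_leq_card SE; rewrite Er leqNgt lt.
Qed.

Definition coverb n (H : hypergraph n) (C : {set 'I_n}) :=
  [forall E in H, E :&: C != set0].

Lemma coverP n (H : hypergraph n) C :
  reflect (forall E, E \in H -> E :&: C != set0) (coverb H C).
Proof. exact: forall_inP. Qed.

Record good n r (H : hypergraph n) : Prop := Good {
  g_unif : forall E, E \in H -> #|E| = r;
  g_int : forall E F, E \in H -> F \in H -> E :&: F != set0;
  g_ne : H != set0;
  g_cod : forall E v, E \in H -> v \in E -> 3 <= codeg H (E :\ v) }.

Lemma good_of n r (H : hypergraph n) :
  uniform r H -> intersecting H -> 3 <= min_pos_codeg r H -> good r H.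
Proof.
move=> /forall_inP hu /forall_inP hi hm.
have hne : H != set0.
  by apply/negP => /eqP h0; move: hm; rewrite /min_pos_codeg h0 eqxx.
split => //.
- by move=> E /hu /eqP.
- by move=> E F /hi /forall_inP; apply.
move=> E v EH vE; rewrite leqNgt; apply/negP => lt.
move: hm; rewrite /min_pos_codeg (negbTE hne) leqNgt => /negP; apply.
apply/bigmax_leqP => k /forall_inP /(_ (E :\ v)) h.
have : in_shadow r H (E :\ v).
  apply/andP; split; last by apply/existsP; exists E; rewrite EH subD1set.
  by move: (cardsD1 v E); rewrite vE (eqP (hu E EH)) add1n => ->.
move/h => kle; move: kle lt; lia.
Qed.

Lemma diff1 n r (H : hypergraph n) E v F : good r H -> E \in H -> v \in E ->
  F \in H -> E :\ v \subset F -> #|F :\: (E :\ v)| = 1.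
Proof.
move=> g EH vE FH sub.
rewrite cardsD (setIidPr sub) (g_unif g FH).
have := cardsD1 v E; rewrite vE (g_unif g EH) add1n => ->.
by rewrite subSnn.
Qed.

Lemma G_gen n r (H : hypergraph n) E v (A : {set 'I_n}) : good r H -> E \in H -> v \in E ->
  (forall F, F \in H -> E :\ v \subset F -> F :\: (E :\ v) \subset A) -> 3 <= #|A|.
Proof.
move=> g EH vE hA; apply: leq_trans (g_cod g EH vE) _.
rewrite /codeg; set S := E :\ v.
have sub : [set F in H | S \subset F] \subset (fun w => w |: S) @: A.
  apply/subsetP=> F; rewrite inE => /andP[FH SF].
  have /cards1P [w hw] : #|F :\: (E :\ v)| == 1 by apply/eqP; exact: (diff1 g EH vE FH SF).
  apply/imsetP; exists w.
    by have := hA F FH SF; rewrite hw sub1set.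
  by rewrite -hw setDUS.
exact: leq_trans (subset_leq_card sub) (leq_imset_card _ _).
Qed.

Lemma W_cov n r (H : hypergraph n) E v F C : good r H -> E \in H -> v \in E ->
  F \in H -> E :\ v \subset F -> coverb H C ->
  (forall x, x \in C -> x \in E -> x = v) -> F :\: (E :\ v) \subset C.
Proof.
move=> g EH vE FH sub /coverP cC hC.
have /cards1P [w hw] : #|F :\: (E :\ v)| == 1 by apply/eqP; exact: (diff1 g EH vE FH sub).
have /set0Pn [y] := cC F FH; rewrite inE => /andP[yF yC].
have yS : y \notin E :\ v.
  by rewrite !inE; apply/negP => /andP[yv yE]; move: yv; rewrite (hC y yC yE) eqxx.
have : y \in F :\: (E :\ v) by rewrite inE yS yF.
by rewrite hw inE => /eqP yw; rewrite sub1set -yw.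
Qed.

Lemma cor1 n r (H : hypergraph n) E v C : good r H -> E \in H -> v \in E ->
  coverb H C -> (forall x, x \in C -> x \in E -> x = v) -> 3 <= #|C|.
Proof.
move=> g EH vE cC hC; apply: (G_gen g EH vE) => F FH sub.
exact: W_cov g EH vE FH sub cC hC.
Qed.

Lemma cor2 n r (H : hypergraph n) E v C1 C2 : good r H -> E \in H -> v \in E ->
  coverb H C1 -> (forall x, x \in C1 -> x \in E -> x = v) ->
  coverb H C2 -> (forall x, x \in C2 -> x \in E -> x = v) -> 3 <= #|C1 :&: C2|.
Proof.
move=> g EH vE c1 h1 c2 h2; apply: (G_gen g EH vE) => F FH sub.
by rewrite subsetI (W_cov g EH vE FH sub c1 h1) (W_cov g EH vE FH sub c2 h2).
Qed.

Lemma cor3 n r (H : hypergraph n) E v C w : good r H -> E \in H -> v \in E ->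
  coverb H C -> (forall x, x \in C -> x \in E -> x = v) -> #|C| = 3 -> w \in C ->
  w |: (E :\ v) \in H.
Proof.
move=> g EH vE cC hC C3 wC; apply/negPn/negP => wn.
have : 3 <= #|C :\ w|.
  apply: (G_gen g EH vE) => F FH sub.
  have hs := W_cov g EH vE FH sub cC hC.
  have /cards1P [y hy] : #|F :\: (E :\ v)| == 1 by apply/eqP; exact: (diff1 g EH vE FH sub).
  move: hs; rewrite hy !sub1set !inE => ->; rewrite andbT.
  apply/negP => /eqP yw; apply: (negP wn); rewrite -yw -hy setDUS //.
by move: (cardsD1 w C); rewrite wC C3 /=; lia.
Qed.

Lemma cover_ge3 n r (H : hypergraph n) C : good r H -> coverb H C -> 3 <= #|C|.
Proof.
move=> g cC; rewrite leqNgt; apply/negP => small.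
have [E EH] : exists E, E \in H by apply/set0Pn; exact: g_ne g.
case: (boolP [exists F in H, #|F :&: C| == 1]).
  case/exists_inP => F FH /cards1P [v hv].
  have vFC : v \in F :&: C by rewrite hv inE.
  have vF : v \in F by move: vFC; rewrite inE => /andP[].
  have hC : forall x, x \in C -> x \in F -> x = v.
    by move=> x xC xF; apply/set1P; rewrite -hv inE xF xC.
  by have := cor1 g FH vF cC hC; rewrite leqNgt small.
move=> /exists_inP nF.
have allC : forall F, F \in H -> C \subset F.
  move=> F FH; have ne := (coverP _ _ cC) F FH.
  have h1 : #|F :&: C| != 1 by apply/negP => h; apply: nF; exists F.
  have h0 : 0 < #|F :&: C| by rewrite card_gt0.
  have hle : #|F :&: C| <= #|C| by apply: subset_leq_card; rewrite subsetIr.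
  have eq : F :&: C = C.
    apply/eqP; rewrite eqEcard subsetIr /=.
    move/eqP: h1 => h1; move: h1 h0 hle small; set a := #|F :&: C|; set c := #|C|; clearbody a c; lia.
  by rewrite -eq subsetIl.
have [b bC] : exists b, b \in C.
  by apply/set0Pn; apply: contraNneq ((coverP _ _ cC) E EH) => ->; rewrite setI0.
have cb : coverb H [set b].
  apply/coverP => F FH; apply/set0Pn; exists b.
  by rewrite !inE eqxx andbT (subsetP (allC F FH)).
have := cor1 g EH (subsetP (allC E EH) b bC) cb.
by rewrite cards1 => /(_ (fun x xb _ => ((set1P xb)))).
Qed.

Definition Bc n r := 'C(n - 3, r - 3).
Definition uc n r := if 4 <= r then 'C(n - 4, r - 4) else 0.
Definition c0 n r := 'C(n - 5, r - 3).

Lemma noncoverP n (H : hypergraph n) C :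
  ~~ coverb H C -> exists2 F, F \in H & F :&: C = set0.
Proof.
rewrite /coverb negb_forall => /existsP [F]; rewrite negb_imply negbK => /andP[FH /eqP h].
by exists F.
Qed.

Lemma dsub n r (H G : hypergraph n) (Q : {set 'I_n}) : good r H -> G \subset H ->
  #|[set E in G | Q \subset E]| <= #|[set E : {set 'I_n} | (#|E| == r) && (Q \subset E)]|.
Proof.
move=> g GH; apply: subset_leq_card; apply/subsetP => E; rewrite !inE => /andP[EG ->].
by rewrite (g_unif g (subsetP GH E EG)) eqxx.
Qed.

Lemma d3 n r (H G : hypergraph n) (Q : {set 'I_n}) : good r H -> G \subset H ->
  #|Q| = 3 -> #|[set E in G | Q \subset E]| <= Bc n r.
Proof.
move=> g GH Q3; apply: leq_trans (dsub Q g GH) _.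
by apply: leq_trans (cnt _ _) _; rewrite card_ord Q3.
Qed.

Lemma d4 n r (H G : hypergraph n) (Q : {set 'I_n}) : good r H -> G \subset H ->
  #|Q| = 4 -> #|[set E in G | Q \subset E]| <= uc n r.
Proof.
move=> g GH Q4; apply: leq_trans (dsub Q g GH) _.
rewrite /uc; case: ifP => r4.
  by apply: leq_trans (cnt _ _) _; rewrite card_ord Q4.
by rewrite cnt0 // Q4 ltnNge r4.
Qed.

Lemma noncover3 n r (H : hypergraph n) (Q : {set 'I_n}) : good r H ->
  #|Q| = 3 -> ~~ coverb H Q -> #|[set E in H | Q \subset E]| <= r * uc n r.
Proof.
move=> g Q3 /noncoverP [F FH FQ].
have -> : r * uc n r = #|F| * uc n r by rewrite (g_unif g FH).
apply: branch.
  move=> E EH QE; have /set0Pn [x] := g_int g EH FH.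
  by rewrite inE => /andP[xE xF]; exists x.
move=> x xF; apply: (d4 g (subxx H)).
rewrite cardsU1 Q3; case: (boolP (x \in Q)) => // xQ.
have : x \in F :&: Q by rewrite inE xF xQ.
by rewrite FQ inE.
Qed.

Lemma BL n r (H G : hypergraph n) A : good r H -> G \subset H ->
  (forall Q : {set 'I_n}, #|Q| = 3 -> #|[set E in G | Q \subset E]| <= A) ->
  #|G| <= r ^ 3 * A.
Proof.
move=> g GH hA.
have key : forall j (S : {set 'I_n}), #|S| + j = 3 ->
    #|[set E in G | S \subset E]| <= r ^ j * A.
  elim=> [|j IH] S hS; first by rewrite expn0 mul1n; apply: hA; rewrite -hS addn0.
  have nc : ~~ coverb H S.
    apply/negP => cS; have := cover_ge3 g cS; rewrite -hS; lia.
  have [F FH FS] := noncoverP nc.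
  have -> : r ^ j.+1 * A = #|F| * (r ^ j * A) by rewrite expnS -mulnA (g_unif g FH).
  apply: branch.
    move=> E EG SE; have /set0Pn [x] := g_int g (subsetP GH E EG) FH.
    by rewrite inE => /andP[xE xF]; exists x.
  move=> x xF; apply: IH; rewrite cardsU1.
  case: (boolP (x \in S)) => xS; last by rewrite -hS addnS add1n addSn.
  have : x \in F :&: S by rewrite inE xF xS.
  by rewrite FS inE.
have := key 3 set0; rewrite cards0 => /(_ erefl).
have -> : [set E in G | set0 \subset E] = G.
  by apply/setP => E; rewrite inE sub0set andbT.
done.
Qed.

Lemma arith n r : 3 <= r -> 2 * r ^ 5 <= n ->
  4 * Bc n r + 3 * r ^ 4 * uc n r < 10 * c0 n r.
Proof.
move=> r3 hn.
have r5 : r ^ 5 = r * r ^ 4 by rewrite expnS.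
have p1 : 3 ^ 4 <= r ^ 4 by rewrite leq_exp2r.
rewrite r5 in hn; move: p1 hn; set p := r ^ 4 => p1 hn.
have hn' : r + 10 <= n by nia.
rewrite /Bc /uc /c0; case: ifP => r4; last first.
  have -> : r = 3 by lia.
  by rewrite subnn !bin0 muln0 addn0.
have e1 : n - 3 = (n - 4).+1 by lia.
have e2 : r - 3 = (r - 4).+1 by lia.
have e3 : n - 4 = (n - 5).+1 by lia.
have P1 : 'C(n - 3, r - 3) = 'C(n - 4, r - 3) + 'C(n - 4, r - 4) by rewrite e1 e2 binS -e2.
have P2 : 'C(n - 4, r - 3) = 'C(n - 5, r - 3) + 'C(n - 5, r - 4) by rewrite e3 e2 binS -e2.
have M : 'C(n - 5, r - 4) <= 'C(n - 4, r - 4) by apply: leq_bin2l; lia.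
have ML : (r - 3) * 'C(n - 4, r - 3) = (n - r) * 'C(n - 4, r - 4).
  have := mul_bin_left (n - 4) (r - 4); rewrite -e2.
  by have -> : n - 4 - (r - 4) = n - r by lia.
have Bpos : 0 < 'C(n - 3, r - 3) by rewrite bin_gt0; lia.
move: P1 P2 M ML Bpos.
set B := 'C(n - 3, r - 3); set B4 := 'C(n - 4, r - 3); set u := 'C(n - 4, r - 4).
set c := 'C(n - 5, r - 3); set c1 := 'C(n - 5, r - 4).
clearbody B B4 u c c1 p => P1 P2 M ML Bpos.
have K : (3 * p + 20) * (r - 3) < 6 * (n - r) by nia.
have Ku : (3 * p + 20) * u < 6 * B.
  have nr : 0 < n - r by lia.
  rewrite -(ltn_pmul2r nr).
  have h1 : (3 * p + 20) * u * (n - r) = (3 * p + 20) * ((r - 3) * B4) by rewrite -mulnA [u * _]mulnC -ML.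
  rewrite h1.
  have h2 : (r - 3) * B4 <= (r - 3) * B by apply: leq_mul => //; lia.
  apply: leq_ltn_trans (leq_mul (leqnn _) h2) _.
  by rewrite mulnA [6 * B * _]mulnAC ltn_pmul2r.
nia.
Qed.

Lemma c0_pos n r : 3 <= r -> 2 * r ^ 5 <= n -> 0 < c0 n r.
Proof.
move=> r3 hn; have p1 : 3 ^ 4 <= r ^ 4 by rewrite leq_exp2r.
have r5 : r ^ 5 = r * r ^ 4 by rewrite expnS.
rewrite r5 in hn; move: p1 hn; set p := r ^ 4 => p1 hn.
rewrite /c0 bin_gt0; nia.
Qed.

Definition KX n r (X : {set 'I_n}) : hypergraph n :=
  [set E : {set 'I_n} | (#|E| == r) && (3 <= #|E :&: X|)].

Lemma capX n (X Y Z : {set 'I_n}) : Y \subset X -> Z \subset ~: X -> (Y :|: Z) :&: X = Y.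
Proof.
move=> YX ZX; apply/setP => x; rewrite !inE.
case xY: (x \in Y); first by rewrite (subsetP YX x xY).
case xX: (x \in X); rewrite ?andbF // andbT.
by apply/negP => xZ; have := subsetP ZX x xZ; rewrite inE xX.
Qed.

Lemma diffX n (X Y Z : {set 'I_n}) : Y \subset X -> Z \subset ~: X -> (Y :|: Z) :\: X = Z.
Proof.
move=> YX ZX; apply/setP => x; rewrite !inE.
have h1 := subsetP YX x; have h2 := subsetP ZX x; rewrite inE in h2.
by case: (x \in X) (x \in Y) (x \in Z) h1 h2 => [] [] [] //= h1 h2;
  first [have := h1 isT | have := h2 isT].
Qed.

Lemma KX_card n r (X : {set 'I_n}) : 3 <= r -> #|X| = 5 ->
  10 * c0 n r <= #|KX r X|.
Proof.
move=> r3 X5.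
set T3 := [set Y : {set 'I_n} | Y \subset X & #|Y| == 3].
set Zs := [set Z : {set 'I_n} | Z \subset ~: X & #|Z| == r - 3].
have cT : #|T3| = 10 by rewrite cards_draws X5.
have cZ : #|Zs| = c0 n r.
  rewrite cards_draws /c0; congr 'C(_, _).
  have h : 5 + #|~: X| = n by rewrite -X5 cardsC card_ord.
  by move: h; set m := #|~: X|; clearbody m; lia.
set f := fun p : {set 'I_n} * {set 'I_n} => p.1 :|: p.2.
have inj : {in setX T3 Zs &, injective f}.
  move=> [Y Z] [Y' Z']; rewrite !inE /f /= => /andP[/andP[YX _] /andP[ZX _]]
    /andP[/andP[YX' _] /andP[ZX' _]] e.
  have e1 := capX YX ZX; rewrite e (capX YX' ZX') in e1.
  have e2 := diffX YX ZX; rewrite e (diffX YX' ZX') in e2.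
  by rewrite e1 e2.
rewrite -cT -cZ -cardsX -(card_in_imset inj); apply: subset_leq_card.
apply/subsetP => E /imsetP [[Y Z]]; rewrite !inE /f /= => /andP[/andP[YX /eqP Y3] /andP[ZX /eqP Zr]] ->.
rewrite (capX YX ZX) Y3 leqnn andbT cardsU.
have -> : Y :&: Z = set0.
  apply/setP => x; rewrite !inE; apply/negP => /andP[xY xZ].
  by have := subsetP ZX x xZ; rewrite inE (subsetP YX x xY).
by rewrite cards0 subn0 Y3 Zr; apply/eqP; lia.
Qed.

Lemma KX_unif n r (X : {set 'I_n}) : uniform r (KX r X).
Proof. by apply/forall_inP => E; rewrite inE => /andP[]. Qed.

Lemma KX_int n r (X : {set 'I_n}) : #|X| = 5 -> intersecting (KX r X).
Proof.
move=> X5; apply/forall_inP => E; rewrite inE => /andP[_ hE].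
apply/forall_inP => F; rewrite inE => /andP[_ hF].
have sub : (E :&: X) :|: (F :&: X) \subset X by rewrite subUset !subsetIr.
have := subset_leq_card sub; rewrite X5 => hU.
have := cardsUI (E :&: X) (F :&: X).
have sub2 : (E :&: X) :&: (F :&: X) \subset E :&: F.
  by apply/subsetP => x; rewrite !inE => /andP[/andP[-> _] /andP[-> _]].
have := subset_leq_card sub2.
move: hE hF hU; set a := #|E :&: X|; set b := #|F :&: X|;
  set c := #|(E :&: X) :|: (F :&: X)|; set d := #|(E :&: X) :&: (F :&: X)|.
set e := #|E :&: F|.
move=> hE hF hU hde hs.
have : 0 < e by clearbody a b c d e; lia.
by rewrite /e card_gt0.
Qed.

Lemma KX_cod n r (X : {set 'I_n}) : 3 <= r -> #|X| = 5 -> r + 2 <= n ->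
  3 <= #|KX r X| -> 3 <= min_pos_codeg r (KX r X).
Proof.
move=> r3 X5 hn hK.
set K := KX r X.
have Kne : K != set0 by rewrite -card_gt0; apply: leq_trans hK.
rewrite /min_pos_codeg (negbTE Kne).
have h3 : 3 < #|K|.+1 by rewrite ltnS.
apply: (@leq_bigmax_cond _ _ _ (Ordinal h3)).
apply/forallP => S; apply/implyP => /andP[/eqP S1 /exists_inP [E EK SE]].
move: EK; rewrite inE => /andP[/eqP Er EX].
have hES : #|E :\: S| = 1 by rewrite cardsD (setIidPr SE) Er S1; lia.
have hSX : 2 <= #|S :&: X|.
  have sub : E :&: X \subset (S :&: X) :|: (E :\: S).
    apply/subsetP => x; rewrite !inE => /andP[xE xX]; rewrite xE xX.
    by case: (x \in S).
  have := leq_trans (subset_leq_card sub) (leq_card_setU _ _).1.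
  by rewrite hES; move: EX; set a := #|E :&: X|; set b := #|S :&: X|; clearbody a b; lia.
have [Tw [T3 hT]] : exists Tw : {set 'I_n}, 3 <= #|Tw| /\
    forall w, w \in Tw -> w \notin S /\ w |: S \in K.
  have cardw : forall w, w \notin S -> #|w |: S| = r by move=> w wS; rewrite cardsU1 wS S1; lia.
  case: (leqP 3 #|S :&: X|) => h.
    exists (~: S); split.
      have := cardsC S; rewrite S1 card_ord => e.
      by move: e; set m := #|~: S|; clearbody m; lia.
    move=> w; rewrite inE => wS; split => //; rewrite inE cardw // eqxx /=.
    apply: leq_trans h _; apply: subset_leq_card; apply: setSI; exact: subsetUr.
  exists (X :\: S); split.
    rewrite cardsD X5 setIC.
    by move: h hSX; set b := #|S :&: X|; clearbody b; lia.
  move=> w; rewrite inE => /andP[wS wX]; split => //; rewrite inE cardw // eqxx /=.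
  have -> : (w |: S) :&: X = w |: (S :&: X).
    by rewrite setIUl (setIidPl _) // sub1set.
  by rewrite cardsU1 inE (negbTE wS) /=; move: hSX h; set b := #|S :&: X|; clearbody b; lia.
apply: leq_trans T3 _.
have inj : {in Tw &, injective (fun w => w |: S)}.
  move=> w w' wT w'T e; have : w \in w' |: S by rewrite -e setU11.
  by rewrite !inE (negbTE (hT w wT).1) orbF => /eqP.
rewrite /codeg -(card_in_imset inj); apply: subset_leq_card.
apply/subsetP => F /imsetP [w wT ->]; rewrite inE (hT w wT).2 /=; exact: subsetUr.
Qed.

Lemma ex_sub (T : finType) (A : {set T}) k : k <= #|A| -> exists2 B : {set T}, B \subset A & #|B| = k.
Proof.
move=> kA.
have : 0 < #|[set B : {set T} | B \subset A & #|B| == k]| by rewrite cards_draws bin_gt0.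
by rewrite card_gt0 => /set0Pn [B]; rewrite inE => /andP[BA /eqP Bk]; exists B.
Qed.

Lemma eq_card_inter (T : finType) (Q Q' : {set T}) :
  #|Q| = #|Q'| -> #|Q| <= #|Q :&: Q'| -> Q = Q'.
Proof.
move=> e le.
have e1 : Q :&: Q' = Q by apply/eqP; rewrite eqEcard subsetIl.
have sQ : Q \subset Q' by rewrite -e1 subsetIr.
by apply/eqP; rewrite eqEcard sQ e leqnn.
Qed.

Lemma card4 n (Q : {set 'I_n}) x : #|Q| = 3 -> x \notin Q -> #|x |: Q| = 4.
Proof. by move=> Q3 xQ; rewrite cardsU1 xQ Q3. Qed.

Definition covs n (H : hypergraph n) := [set Q : {set 'I_n} | (#|Q| == 3) && coverb H Q].

Lemma Y_of_two n r (H : hypergraph n) Q1 Q2 : good r H -> Q1 \in covs H -> Q2 \in covs H ->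
  #|Q1 :&: Q2| = 2 ->
  #|Q1 :|: Q2| = 4 /\ forall T : {set 'I_n}, T \subset Q1 :|: Q2 -> #|T| = 3 -> coverb H T.
Proof.
move=> g; rewrite !inE => /andP[/eqP c1 cv1] /andP[/eqP c2 cv2] i2.
set Y := Q1 :|: Q2.
have Y4 : #|Y| = 4 by rewrite cardsU c1 c2 i2.
split => // T TY T3; apply/negPn/negP => /noncoverP [E EH ET].
have [p hp] : exists p, Y :\: T = [set p].
  apply/cards1P; rewrite cardsD (setIidPr TY) Y4 T3 //.
have inYT : forall x, x \in Y -> x \in E -> x = p.
  move=> x xY xE; apply/set1P; rewrite -hp inE xY andbT.
  apply/negP => xT; have : x \in E :&: T by rewrite inE xE xT.
  by rewrite ET inE.
have pE : p \in E.
  have /set0Pn [y] := (coverP _ _ cv1) E EH; rewrite inE => /andP[yE yQ].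
  by rewrite -(inYT y _ yE) // inE yQ.
have := cor2 g EH pE cv1 (fun x xQ xE => inYT x (subsetP (subsetUl Q1 Q2) x xQ) xE)
  cv2 (fun x xQ xE => inYT x (subsetP (subsetUr Q1 Q2) x xQ) xE).
by rewrite i2.
Qed.

Definition dg n (G : hypergraph n) (Q : {set 'I_n}) := #|[set E in G | Q \subset E]|.

Lemma fat_meet n r (H : hypergraph n) Q0 Q : good r H -> Q0 \in covs H -> Q \in covs H ->
  4 * uc n r < dg H Q0 -> Q :&: Q0 != set0.
Proof.
move=> g; rewrite !inE => /andP[/eqP c0 cv0] /andP[/eqP c cv] fat.
apply/negP => /eqP e; move: fat; rewrite ltnNge => /negP; apply.
apply: leq_trans (_ : #|Q| * uc n r <= _); last by rewrite c leq_mul2r leqnSn orbT.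
apply: branch.
  move=> E EH QE; have /set0Pn [x] := (coverP _ _ cv) E EH.
  by rewrite inE => /andP[xE xQ]; exists x.
move=> x xQ; apply: (d4 g (subxx H)); apply: card4 => //.
apply/negP => xQ0; have : x \in Q :&: Q0 by rewrite inE xQ xQ0.
by rewrite e inE.
Qed.

Lemma in_I1 (T : finType) (A B : {set T}) p : A :&: B = [set p] -> p \in A /\ p \in B.
Proof.
move=> e; have : p \in A :&: B by rewrite e set11.
by rewrite inE => /andP.
Qed.

Lemma I1_eq (T : finType) (A B : {set T}) p x : A :&: B = [set p] -> x \in A -> x \in B -> x = p.
Proof. by move=> e xA xB; apply/set1P; rewrite -e inE xA xB. Qed.

Lemma fat_inj n r (H : hypergraph n) Q0 Q1 Q2 p : good r H -> Q0 \in covs H ->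
  Q1 \in covs H -> Q2 \in covs H -> 4 * uc n r < dg H Q0 -> Q1 != Q2 ->
  Q1 :&: Q0 = [set p] -> Q2 :&: Q0 = [set p] -> False.
Proof.
move=> g; rewrite !inE => /andP[/eqP c0 cv0] /andP[/eqP c1 cv1] /andP[/eqP c2 cv2] fat ne e1 e2.
have [pQ1 pQ0] := in_I1 e1; have [pQ2 _] := in_I1 e2.
set F := (Q1 :|: Q2) :\ p.
have cF : #|F| <= 4.
  have h1 := cardsUI Q1 Q2.
  have h2 : 0 < #|Q1 :&: Q2| by rewrite card_gt0; apply/set0Pn; exists p; rewrite inE pQ1.
  have h3 := cardsD1 p (Q1 :|: Q2); rewrite inE pQ1 /= in h3.
  move: h1 h2 h3; rewrite c1 c2 /F.
  set a := #|Q1 :|: Q2|; set b := #|Q1 :&: Q2|; set c := #|_ :\ p|; clearbody a b c; lia.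
move: fat; rewrite ltnNge => /negP; apply.
apply: leq_trans (_ : #|F| * uc n r <= _); last by rewrite leq_mul2r cF orbT.
apply: branch.
  move=> E EH QE.
  case: (boolP [exists x in F, x \in E]) => [/exists_inP [x xF xE] | /exists_inP nx].
    by exists x.
  exfalso.
  have pE : p \in E by apply: (subsetP QE).
  have hQ : forall Q : {set 'I_n}, Q \subset Q1 :|: Q2 -> forall x, x \in Q -> x \in E -> x = p.
    move=> Q sQ x xQ xE; apply/eqP/negPn/negP => xp; apply: nx; exists x => //.
    by rewrite /F in_setD1 xp (subsetP sQ x xQ).
  have := cor2 g EH pE cv1 (hQ Q1 (subsetUl _ _)) cv2 (hQ Q2 (subsetUr _ _)).
  move=> h; apply: (negP ne); apply/eqP; apply: eq_card_inter; by rewrite ?c1 ?c2.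
move=> x; rewrite /F !inE => /andP[xp xU].
apply: (d4 g (subxx H)); apply: card4 => //.
apply/negP => xQ0; apply: (negP xp); apply/eqP.
by case/orP: xU => xQ; [apply: (I1_eq e1) | apply: (I1_eq e2)].
Qed.

Lemma covs_small n r (H : hypergraph n) Q0 : good r H ->
  (forall Q1 Q2, Q1 \in covs H -> Q2 \in covs H -> #|Q1 :&: Q2| != 2) ->
  Q0 \in covs H -> 4 * uc n r < dg H Q0 -> #|covs H| <= 4.
Proof.
move=> g h2 Q0C fat.
have c0 : #|Q0| = 3 by move: Q0C; rewrite inE => /andP[/eqP].
have one : forall Q, Q \in covs H :\ Q0 -> #|Q :&: Q0| = 1.
  move=> Q; rewrite in_setD1 => /andP[ne QC].
  have a1 : 0 < #|Q :&: Q0| by rewrite card_gt0 (fat_meet g Q0C QC fat).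
  have a2 := h2 Q Q0 QC Q0C.
  have cQ : #|Q| = 3 by move: QC; rewrite inE => /andP[/eqP].
  have a3 : #|Q :&: Q0| <= 3 by rewrite -cQ subset_leq_card // subsetIl.
  have a4 : #|Q :&: Q0| != 3.
    apply/negP => /eqP e3; apply: (negP ne); apply/eqP; apply: eq_card_inter; by rewrite ?cQ ?c0 ?e3.
  move/eqP: a2 => a2; move/eqP: a4 => a4.
  by move: a1 a2 a3 a4; set k := #|Q :&: Q0|; clearbody k; lia.
have [x0 _] : exists x0 : 'I_n, x0 \in Q0.
  by apply/set0Pn; rewrite -card_gt0 c0.
pose f Q := odflt x0 [pick x in Q :&: Q0].
have fE : forall Q, Q \in covs H :\ Q0 -> Q :&: Q0 = [set f Q].
  move=> Q QC; have /cards1P [y hy] : #|Q :&: Q0| == 1 by rewrite one.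
  rewrite hy /f; case: pickP => [z|]; first by rewrite hy => /set1P ->.
  by move=> /(_ y); rewrite hy set11.
have inj : {in covs H :\ Q0 &, injective f}.
  move=> Q1 Q2 Q1C Q2C e; apply/eqP/negPn/negP => ne.
  have := fE Q2 Q2C; rewrite -e => e2.
  move: (Q1C) (Q2C); rewrite !in_setD1 => /andP[_ C1] /andP[_ C2].
  exact: fat_inj g Q0C C1 C2 fat ne (fE Q1 Q1C) e2.
have : #|covs H :\ Q0| <= 3.
  rewrite -(card_in_imset inj) -c0; apply: subset_leq_card.
  apply/subsetP => x /imsetP [Q QC ->].
  by have := in_I1 (fE Q QC); case => _.
by rewrite (cardsD1 Q0 (covs H)) Q0C.
Qed.

Lemma step1 n r (H : hypergraph n) : good r H -> 3 <= r ->
  4 * Bc n r + 3 * r ^ 4 * uc n r < 10 * c0 n r -> 10 * c0 n r <= #|H| ->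
  exists Q1 Q2, [/\ Q1 \in covs H, Q2 \in covs H & #|Q1 :&: Q2| = 2].
Proof.
move=> g r3 big low.
case: (boolP [exists Q1 in covs H, [exists Q2 in covs H, #|Q1 :&: Q2| == 2]]).
  case/exists_inP => Q1 Q1C /exists_inP [Q2 Q2C /eqP e]; by exists Q1, Q2.
move/exists_inP => nx.
have h2 : forall Q1 Q2, Q1 \in covs H -> Q2 \in covs H -> #|Q1 :&: Q2| != 2.
  move=> Q1 Q2 Q1C Q2C; apply/negP => e; apply: nx; exists Q1 => //.
  by apply/exists_inP; exists Q2.
exfalso; move: low; rewrite leqNgt => /negP; apply.
have r43 : r ^ 4 = r * r ^ 3 by rewrite expnS.
case: (boolP [exists Q0 in covs H, 4 * uc n r < dg H Q0]).
  case/exists_inP => Q0 Q0C fat.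
  have c4 := covs_small g h2 Q0C fat.
  set G1 := [set E in H | [exists Q in covs H, Q \subset E]].
  set G2 := [set E in H | ~~ [exists Q in covs H, Q \subset E]].
  have sG1 : G1 \subset H by apply/subsetP => E; rewrite inE => /andP[].
  have sG2 : G2 \subset H by apply/subsetP => E; rewrite inE => /andP[].
  have hH : #|H| <= #|G1| + #|G2|.
    apply: leq_trans (leq_card_setU G1 G2).1; apply: subset_leq_card.
    apply/subsetP => E EH; rewrite !inE EH /=; by case: [exists _ in _, _].
  have hG1 : #|G1| <= #|covs H| * Bc n r.
    apply: ub.
      by move=> E; rewrite inE => /andP[_ /exists_inP [Q QC QE]]; exists Q.
    move=> Q; rewrite inE => /andP[/eqP Q3 _]; exact: d3 g sG1 Q3.
  have hG2 : #|G2| <= r ^ 3 * (r * uc n r).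
    apply: (BL g sG2) => Q Q3.
    case: (boolP (coverb H Q)) => cQ.
      suff -> : [set E in G2 | Q \subset E] = set0 by rewrite cards0.
      apply/setP => E; rewrite !inE.
      apply/negP => /andP[/andP[_ nE] QE]; apply: (negP nE); apply/exists_inP; exists Q => //.
      by rewrite inE Q3 eqxx cQ.
    apply: leq_trans (noncover3 g Q3 cQ); apply: subset_leq_card.
    by apply/subsetP => E; rewrite !inE => /andP[/andP[-> _] ->].
  have := leq_trans hH (leq_add hG1 hG2).
  have hB : #|covs H| * Bc n r <= 4 * Bc n r by rewrite leq_mul2r c4 orbT.
  move: hB big; rewrite r43.
  set a := #|covs H| * Bc n r; set b := Bc n r; set u := uc n r; set c := c0 n r;
    set q := r ^ 3; set h := #|H|; clearbody a b u c q h.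
  nia.
move/exists_inP => nf.
have hH : #|H| <= r ^ 3 * (4 * uc n r + r * uc n r).
  apply: (BL g (subxx H)) => Q Q3.
  case: (boolP (coverb H Q)) => cQ.
    have QC : Q \in covs H by rewrite inE Q3 eqxx cQ.
    apply: leq_trans (leq_addr (r * uc n r) _).
    by rewrite leqNgt; apply/negP => lt; apply: nf; exists Q.
  exact: leq_trans (noncover3 g Q3 cQ) (leq_addl _ _).
move: hH big; rewrite r43.
set b := Bc n r; set u := uc n r; set c := c0 n r; set q := r ^ 3; set h := #|H|; clearbody b u c q h.
nia.
Qed.

Definition goodY n (H : hypergraph n) (Y : {set 'I_n}) :=
  #|Y| = 4 /\ forall T : {set 'I_n}, T \subset Y -> #|T| = 3 -> coverb H T.

Lemma meet2 n r (H : hypergraph n) (Y E : {set 'I_n}) : good r H -> goodY H Y -> E \in H -> 2 <= #|E :&: Y|.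
Proof.
move=> g [Y4 hY] EH; rewrite leqNgt; apply/negP => lt.
have : 3 <= #|Y :\: E|.
  rewrite cardsD Y4 setIC; move: lt; set k := #|E :&: Y|; clearbody k; lia.
case/ex_sub => T TYE T3.
have TY : T \subset Y by apply: subset_trans TYE (subsetDl _ _).
have /set0Pn [z] := (coverP _ _ (hY T TY T3)) E EH.
rewrite inE => /andP[zE zT]; have := subsetP TYE z zT.
by rewrite inE zE.
Qed.

Lemma stepY n r (H : hypergraph n) (Y R P : {set 'I_n}) (x w : 'I_n) : good r H -> goodY H Y ->
  R \subset ~: Y -> P \subset Y -> #|P| = 2 -> R :|: P \in H -> x \in P ->
  w \in Y -> w \notin P -> R :|: (w |: (P :\ x)) \in H.
Proof.
move=> g [Y4 hY] RY PY P2 RPH xP wY wP.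
have xR : x \notin R.
  by apply/negP => xR; have := subsetP RY x xR; rewrite inE (subsetP PY x xP).
set C := Y :\: (P :\ x).
have CY : C \subset Y by apply: subsetDl.
have C3 : #|C| = 3.
  rewrite cardsD Y4 (setIidPr _); last by apply: subset_trans (subD1set _ _) PY.
  by move: (cardsD1 x P); rewrite xP P2 => e; rewrite -(addKn 1 #|P :\ x|) -e.
have cv := hY C CY C3.
have xE : x \in R :|: P by rewrite inE xP orbT.
have hC : forall z, z \in C -> z \in R :|: P -> z = x.
  move=> z; rewrite !inE => /andP[hz zY] /orP[zR|zP].
    by have := subsetP RY z zR; rewrite inE zY.
  by apply/eqP; move: hz; rewrite zP andbT negbK.
have wC : w \in C by rewrite !inE wY (negbTE wP) andbF.
have := cor3 g RPH xE cv hC C3 wC.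
congr (_ \in H); apply/setP => z; rewrite !inE.
case: (z =P x) => [->|_] /=; first by rewrite (negbTE xR) orbF.
by rewrite orbCA.
Qed.

Lemma step1pair n r (H : hypergraph n) (Y R P P' : {set 'I_n}) : good r H -> goodY H Y ->
  R \subset ~: Y -> P \subset Y -> P' \subset Y -> #|P| = 2 -> #|P'| = 2 ->
  #|P :&: P'| = 1 -> R :|: P \in H -> R :|: P' \in H.
Proof.
move=> g gY RY PY P'Y P2 P'2 i1 RPH.
have /cards1P [x hx] : #|P :\: P'| == 1 by rewrite cardsD P2 i1.
have /cards1P [w hw] : #|P' :\: P| == 1 by rewrite cardsD P'2 setIC i1.
have : x \in P :\: P' by rewrite hx set11.
rewrite inE => /andP[xP' xP].
have : w \in P' :\: P by rewrite hw set11.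
rewrite inE => /andP[wP wP'].
have := stepY g gY RY PY P2 RPH xP (subsetP P'Y w wP') wP.
suff -> : w |: (P :\ x) = P' by [].
apply/eqP; rewrite eqEcard; apply/andP; split.
  apply/subsetP => z; rewrite !inE => /orP[/eqP -> //|/andP[zx zP]].
  apply/negPn/negP => zP'.
  have : z \in P :\: P' by rewrite inE zP zP'.
  by rewrite hx inE (negbTE zx).
rewrite cardsU1 P'2 !inE (negbTE wP) andbF /=.
by move: (cardsD1 x P); rewrite xP P2 => e; rewrite -(addKn 1 #|P :\ x|) -e.
Qed.

Lemma allpairs n r (H : hypergraph n) (Y R P : {set 'I_n}) : good r H -> goodY H Y ->
  R \subset ~: Y -> P \subset Y -> #|P| = 2 -> R :|: P \in H ->
  forall P' : {set 'I_n}, P' \subset Y -> #|P'| = 2 -> R :|: P' \in H.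
Proof.
move=> g gY RY PY P2 RPH P' P'Y P'2.
have le : #|P :&: P'| <= 2 by rewrite -P2 subset_leq_card // subsetIl.
have [k2|k1|k0] : [\/ #|P :&: P'| = 2, #|P :&: P'| = 1 | #|P :&: P'| = 0].
- move: le; set k := #|P :&: P'|; clearbody k; case: k => [|[|[|k]]] // _;
    [exact: Or33 | exact: Or32 | exact: Or31].
- by rewrite -(eq_card_inter (_ : #|P| = #|P'|) _) // ?P2 ?P'2 ?k2.
- exact: step1pair g gY RY PY P'Y P2 P'2 k1 RPH.
have [y yP] : exists y, y \in P by apply/set0Pn; rewrite -card_gt0 P2.
have [z zP'] : exists z, z \in P' by apply/set0Pn; rewrite -card_gt0 P'2.
have e0 : P :&: P' = set0 by apply/eqP; rewrite -cards_eq0 k0.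
have zP : z \notin P.
  apply/negP => zP; have : z \in P :&: P' by rewrite inE zP zP'.
  by rewrite e0 inE.
have yP' : y \notin P'.
  apply/negP => yP'; have : y \in P :&: P' by rewrite inE yP yP'.
  by rewrite e0 inE.
have yz : y != z by apply/eqP => e; move: zP; rewrite -e yP.
set P'' := [set y; z].
have P''Y : P'' \subset Y by rewrite subUset !sub1set (subsetP PY y yP) (subsetP P'Y z zP').
have P''2 : #|P''| = 2 by rewrite cards2 yz.
have i1 : #|P :&: P''| = 1.
  apply/eqP/cards1P; exists y; apply/setP => t; rewrite !inE.
  case: (t =P y) => [->|ty] /=; first by rewrite yP.
  by case: (t =P z) => [->|_]; rewrite ?(negbTE zP) ?andbF.
have i2 : #|P'' :&: P'| = 1.
  apply/eqP/cards1P; exists z; apply/setP => t; rewrite !inE.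
  case: (t =P z) => [->|tz] /=; first by rewrite zP' orbT.
  by case: (t =P y) => [->|_]; rewrite ?(negbTE yP') //.
have := step1pair g gY RY PY P''Y P2 P''2 i1 RPH.
exact: step1pair g gY RY P''Y P'Y P''2 P'2 i2.
Qed.

Lemma step2 n r (H : hypergraph n) (Y : {set 'I_n}) : good r H -> goodY H Y -> 3 <= r ->
  4 * Bc n r + 3 * r ^ 4 * uc n r < 10 * c0 n r -> 10 * c0 n r <= #|H| ->
  exists X : {set 'I_n}, #|X| = 5 /\ forall E, E \in H -> 3 <= #|E :&: X|.
Proof.
move=> g gY r3 big low.
have gY' := gY; case: gY' => Y4 hY.
set RR := [set E :\: Y | E in [set E in H | #|E :&: Y| == 2]].
have splitE : forall E : {set 'I_n}, (E :\: Y) :|: (E :&: Y) = E.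
  by move=> E; rewrite setUC setID.
have DY : forall E : {set 'I_n}, E :\: Y \subset ~: Y.
  by move=> E; apply/subsetP => z; rewrite !inE => /andP[].
have RRok : forall R : {set 'I_n}, R \in RR -> [/\ R \subset ~: Y, #|R| <= r &
    forall P : {set 'I_n}, P \subset Y -> #|P| = 2 -> R :|: P \in H].
  move=> R /imsetP [E]; rewrite inE => /andP[EH /eqP E2] ->; split => //.
    by rewrite -(g_unif g EH); apply: subset_leq_card; apply: subsetDl.
  apply: (allpairs g gY (DY E) (subsetIr E Y) E2); by rewrite splitE.
have [P0 P0Y P02] : exists2 P0 : {set 'I_n}, P0 \subset Y & #|P0| = 2 by apply: ex_sub; rewrite Y4.
set P0' := Y :\: P0.
have P0'Y : P0' \subset Y by apply: subsetDl.
have P0'2 : #|P0'| = 2 by rewrite cardsD Y4 (setIidPr P0Y) P02.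
have RRint : forall R R' : {set 'I_n}, R \in RR -> R' \in RR -> exists2 z, z \in R & z \in R'.
  move=> R R' /RRok [RY _ hR] /RRok [R'Y _ hR'].
  have /set0Pn [z] := g_int g (hR P0 P0Y P02) (hR' P0' P0'Y P0'2).
  rewrite in_setI !in_setU => /andP[/orP[zR|zP0] /orP[zR'|zP0']].
  - by exists z.
  - by have := subsetP RY z zR; rewrite inE (subsetP P0'Y z zP0').
  - by have := subsetP R'Y z zR'; rewrite inE (subsetP P0Y z zP0).
  - by move: zP0'; rewrite inE zP0.
have [R1 R1RR] : exists R1, R1 \in RR.
  have nc : ~~ coverb H P0 by apply/negP => c; have := cover_ge3 g c; rewrite P02.
  have [E EH EP0] := noncoverP nc.
  have m2 := meet2 g gY EH.
  have sub : E :&: Y \subset P0'.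
    apply/subsetP => z; rewrite in_setI => /andP[zE zY]; rewrite in_setD zY andbT.
    apply/negP => zP0; have : z \in E :&: P0 by rewrite in_setI zE zP0.
    by rewrite EP0 inE.
  have E2 : #|E :&: Y| = 2.
    by have := subset_leq_card sub; rewrite P0'2; move: m2; set k := #|E :&: Y|; clearbody k; lia.
  exists (E :\: Y); apply/imsetP; exists E => //; by rewrite inE EH E2 eqxx.
case: (boolP [exists e, [forall R in RR, e \in R]]).
  case/existsP => e /forall_inP he.
  have eY : e \notin Y.
    by have [RY _ _] := RRok R1 R1RR; have := subsetP RY e (he R1 R1RR); rewrite inE.
  exists (e |: Y); split; first by rewrite cardsU1 eY Y4.
  move=> E EH; have m2 := meet2 g gY EH.
  case: (leqP 3 #|E :&: Y|) => m3.
    by apply: leq_trans m3 _; apply: subset_leq_card; apply: setIS; apply: subsetUr.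
  have E2 : #|E :&: Y| = 2 by move: m2 m3; set k := #|E :&: Y|; clearbody k; lia.
  have eE : e \in E.
    have : e \in E :\: Y by apply: he; apply/imsetP; exists E => //; rewrite inE EH E2 eqxx.
    by rewrite in_setD => /andP[].
  have sub : e |: (E :&: Y) \subset E :&: (e |: Y).
    by rewrite subUset sub1set !inE eE eqxx /= setIS // subsetUr.
  apply: leq_trans (subset_leq_card sub); rewrite cardsU1 E2 in_setI (negbTE eY) andbF.
  done.
rewrite negb_exists => /forallP nh.
have hR : forall x, exists2 R, R \in RR & x \notin R.
  move=> x; have := nh x; rewrite negb_forall_in => /exists_inP [R RRR xR]; by exists R.
exfalso; move: low; rewrite leqNgt => /negP; apply.
have inRR : forall E, E \in H -> #|E :&: Y| = 2 -> E :\: Y \in RR.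
  by move=> E EH E2; apply/imsetP; exists E => //; rewrite inE EH E2 eqxx.
set Ge3 := [set E in H | 3 <= #|E :&: Y|].
set G2 := [set E in H | #|E :&: Y| == 2].
have sG3 : Ge3 \subset H by apply/subsetP => E; rewrite inE => /andP[].
have sG2 : G2 \subset H by apply/subsetP => E; rewrite inE => /andP[].
have hH : #|H| <= #|Ge3| + #|G2|.
  apply: leq_trans (leq_card_setU Ge3 G2).1; apply: subset_leq_card.
  apply/subsetP => E EH; rewrite !inE EH /=.
  have m2 := meet2 g gY EH.
  by case: (leqP 3 #|E :&: Y|) => //= m3; apply/eqP; move: m2 m3; set k := #|E :&: Y|; clearbody k; lia.
have hG3 : #|Ge3| <= 4 * Bc n r.
  have -> : 4 = #|[set T : {set 'I_n} | T \subset Y & #|T| == 3]| by rewrite cards_draws Y4.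
  apply: ub.
    move=> E; rewrite inE => /andP[EH E3].
    have [T TEY T3] := ex_sub E3.
    exists T; last by apply: subset_trans TEY (subsetIl _ _).
    by rewrite inE T3 eqxx andbT; apply: subset_trans TEY (subsetIr _ _).
  by move=> T; rewrite inE => /andP[_ /eqP T3]; apply: (d3 g sG3 T3).
have hG2 : #|G2| <= 6 * (r * (r * uc n r)).
  have -> : 6 = #|[set P : {set 'I_n} | P \subset Y & #|P| == 2]| by rewrite cards_draws Y4.
  apply: ub.
    move=> E; rewrite inE => /andP[EH E2]; exists (E :&: Y); last by apply: subsetIl.
    by rewrite inE subsetIr E2.
  move=> P; rewrite inE => /andP[PY /eqP P2].
  have meetR : forall (R : {set 'I_n}) E, R \in RR -> E \in G2 -> exists2 z, z \in R & z \in E.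
    move=> R E RRR; rewrite inE => /andP[EH /eqP E2].
    have [z zE zR] := RRint _ _ (inRR E EH E2) RRR.
    by exists z => //; move: zE; rewrite in_setD => /andP[].
  have [R1Y R1r _] := RRok R1 R1RR.
  apply: leq_trans (_ : #|R1| * (r * uc n r) <= _); last by rewrite leq_mul2r R1r orbT.
  apply: branch.
    by move=> E EG _; have [z zR zE] := meetR R1 E R1RR EG; exists z.
  move=> x xR1.
  have [Rx RxRR xRx] := hR x.
  have [RxY Rxr _] := RRok Rx RxRR.
  apply: leq_trans (_ : #|Rx| * uc n r <= _); last by rewrite leq_mul2r Rxr orbT.
  apply: branch.
    by move=> E EG _; have [z zR zE] := meetR Rx E RxRR EG; exists z.
  move=> y yRx; apply: (d4 g sG2).
  have xP : x \notin P.
    by apply/negP => xP; have := subsetP R1Y x xR1; rewrite inE (subsetP PY x xP).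
  have xP3 : #|x |: P| = 3 by rewrite cardsU1 xP P2.
  apply: card4 => //; rewrite in_setU1 negb_or; apply/andP; split.
    by apply/negP => /eqP yx; rewrite -yx yRx in xRx.
  by apply/negP => yP; have := subsetP RxY y yRx; rewrite inE (subsetP PY y yP).
have r4 : r ^ 4 = (r * r) * (r * r) by rewrite !expnS expn0 muln1 !mulnA.
have := leq_trans hH (leq_add hG3 hG2).
have e6 : 6 * (r * (r * uc n r)) = 6 * (r * r) * uc n r by rewrite !mulnA.
rewrite e6; move: big; rewrite r4.
have q9 : 9 <= r * r by nia.
move: q9; set b := Bc n r; set u := uc n r; set c := c0 n r; set q := r * r; set h := #|H|.
clearbody b u c q h.
nia.
Qed.

Theorem theorem9 (r n : nat) (H : hypergraph n) :
  3 <= r -> 2 * r ^ 5 <= n ->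
  uniform r H -> intersecting H -> 3 <= min_pos_codeg r H ->
  (forall H' : hypergraph n,
      uniform r H' -> intersecting H' -> 3 <= min_pos_codeg r H' ->
      #|H'| <= #|H|) ->
  kernel_system r 3 H.
Proof.
move=> r3 hn hu hi hm hmax.
have g := good_of hu hi hm.
have big := arith r3 hn.
have c0p := c0_pos r3 hn.
have hn2 : r + 5 <= n.
  have p1 : 3 ^ 4 <= r ^ 4 by rewrite leq_exp2r.
  have r5 : r ^ 5 = r * r ^ 4 by rewrite expnS.
  move: hn p1; rewrite r5; set p := r ^ 4; clearbody p; nia.
have KXok : forall X : {set 'I_n}, #|X| = 5 -> 10 * c0 n r <= #|KX r X| /\ #|KX r X| <= #|H|.
  move=> X X5; have kc := KX_card r3 X5; split => //.
  apply: hmax; [exact: KX_unif | exact: KX_int | apply: KX_cod => //; first by lia].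
  by apply: leq_trans kc; move: c0p; set c := c0 n r; clearbody c; lia.
have [X0 _ X05] : exists2 X0 : {set 'I_n}, X0 \subset setT & #|X0| = 5.
  by apply: ex_sub; rewrite cardsT card_ord; lia.
have low : 10 * c0 n r <= #|H| by have [a b] := KXok X0 X05; exact: leq_trans a b.
have [Q1 [Q2 [Q1C Q2C i2]]] := step1 g r3 big low.
have [Y4 hY] := Y_of_two g Q1C Q2C i2.
have [X [X5 hX]] := step2 g (conj Y4 hY) r3 big low.
exists X; split => //.
have sub : H \subset KX r X.
  by apply/subsetP => E EH; rewrite inE (g_unif g EH) eqxx hX.
have [_ le] := KXok X X5.
by apply/eqP; rewrite eqEcard sub le.
Qed.
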